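(* Let $\mathbf a=(a_1,\dots,a_m)$ be an irreducible sequence, and for a nonnegative integer $x$ let $\mathbf m'(\mathbf a,x)$ be the $m\times m$ matrix whose $(i,j)$-entry is $$\frac{(q^{2x+2i};q^2)_{a_j+1-2i}}{(q^{2x+2i};q)_{a_j+1-2i}\,(q;q)_{a_j+1-2i}}$$ if $a_j+1-2i\ge 0$, and $0$ otherwise. Then there exists a lower triangular $m\times m$ matrix $\mathbf f(\mathbf a)$ with entries in the field $\mathbb C(q)$ of rational functions, all diagonal entries equal to $1$, and whose entries do not depend on $x$, such that for every nonnegative integer $x$ the product $\mathbf m'(\mathbf a,x)\cdot \mathbf f(\mathbf a)$ is upper triangular and its diagonal entries are elements of $\mathbb C(q)$ that do not depend on $x$.
   Context: $q$ is an indeterminate. For integers $n\ge 0$, $(a;q)_n=\prod_{j=0}^{n-1}(1-aq^j)$ (so $(a;q)_0=1$). A finite sequence of integers $\mathbf a=(a_1,\dots,a_m)$ is called admissible if it is strictly increasing and $2i-1\le a_i\le 2m$ for all $1\le i\le m$. An admissible sequence is called irreducible if moreover $2i+1\le a_i\le 2m$ for all $1\le i<m$ and $a_m=2m$. *)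

(* Defs.v *)
(* C = (complex R) for R : realType (the real numbers),
   C(q) = {fraction {poly C}}, q = 'X viewed in the fraction field. *)
From HB Require Import structures.
From mathcomp Require Import all_boot all_order all_algebra.
From mathcomp Require Import complex.
From mathcomp Require Import reals.
Set Implicit Arguments. Unset Strict Implicit. Unset Printing Implicit Defensive.
Import Order.TTheory GRing.Theory Num.Theory.
Local Open Scope ring_scope.

Definition Cq (R : realType) : fieldType := {fraction {poly (complex R)}}.

Definition qq (R : realType) : Cq R := FracField.tofrac ('X : {poly (complex R)}).

Definition qpoch (F : fieldType) (a b : F) (n : nat) : F :=
  \prod_(j < n) (1 - a * b ^+ j).

(* Sequences a = (a_1,...,a_m) are lists of nats; a_k = nth 0 a (k-1),
   m = size a.  Below, index k is 0-based, i.e. a_{k+1} = nth 0 a k. *)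
Definition admissible (a : seq nat) : Prop :=
  sorted ltn a /\
  (forall k, (k < size a)%N -> (2 * k + 1 <= nth 0 a k <= 2 * size a)%N).

Definition irreducible_seq (a : seq nat) : Prop :=
  admissible a /\
  (forall k, (k.+1 < size a)%N -> (2 * k + 3 <= nth 0 a k <= 2 * size a)%N) /\
  nth 0 a (size a).-1 = (2 * size a)%N.

(* The matrix m'(a,x).  With 0-based i (paper's i = i+1) and j,
   n := a_j + 1 - 2(i+1) = a_j - (2i+1); entry is
   (q^{2x+2(i+1)}; q^2)_n / ((q^{2x+2(i+1)}; q)_n (q;q)_n)  if n >= 0, else 0. *)
Definition mprime (R : realType) (a : seq nat) (x : nat)
  : 'M[Cq R]_(size a) :=
  \matrix_(i < size a, j < size a)
    let aj := nth 0 a j in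
    if (2 * i + 1 <= aj)%N then
      let n := (aj - (2 * i + 1))%N in
      let b := qq R ^+ (2 * x + 2 * i.+1) in
      qpoch b (qq R ^+ 2) n / (qpoch b (qq R) n * qpoch (qq R) (qq R) n)
    else 0.

(* Main.v *)
Require Import Defs.
From HB Require Import structures.
From mathcomp Require Import all_boot all_order all_algebra all_fingroup.
From mathcomp Require Import complex reals.
From mathcomp Require Import ring lra zify.
Set Implicit Arguments. Unset Strict Implicit. Unset Printing Implicit Defensive.
Import Order.TTheory GRing.Theory Num.Theory.

Definition Wsum n (b al : nat -> nat) (s : 'S_n) := \sum_(i < n) b i * al (s i).

Lemma perm_incr_id n (s : 'S_n) :
  (forall k k1 : 'I_n, val k1 = (val k).+1 -> s k < s k1) -> s = 1%g.
Proof.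
move=> Hinc.
have Ha : forall i (Hi : i < n), i <= s (Ordinal Hi).
  elim=> [|i IH] Hi //.
  have Hi' : i < n by lia.
  have := IH Hi'; have := Hinc (Ordinal Hi') (Ordinal Hi) erefl; lia.
have Hb : forall j i (Hi : i < n), n - i = j.+1 -> s (Ordinal Hi) <= i.
  elim=> [|j IH] i Hi E.
    have := ltn_ord (s (Ordinal Hi)); lia.
  have Hi' : i.+1 < n by lia.
  have E' : n - i.+1 = j.+1 by lia.
  have := IH i.+1 Hi' E'; have := Hinc (Ordinal Hi) (Ordinal Hi') erefl; lia.
apply/permP => -[i Hi]; rewrite perm1.
have := Ha i Hi; have := Hb (n - i).-1 i Hi ltac:(lia) => H1 H2.
by apply/val_inj => /=; lia.
Qed.

Lemma descent n (s : 'S_n) : s != 1%g ->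
  exists k k1 : 'I_n, val k1 = (val k).+1 /\ s k1 < s k.
Proof.
move=> Hs.
case: (boolP [exists k : 'I_n, exists k1 : 'I_n, (val k1 == (val k).+1) && (s k1 < s k)]).
  by move=> /existsP[k /existsP[k1 /andP[/eqP E H]]]; exists k, k1.
move=> H; exfalso; move/eqP: Hs; apply; apply: perm_incr_id => k k1 E.
case: (ltngtP (s k) (s k1)) => // H2.
- move: H; rewrite negb_exists => /forallP/(_ k); rewrite negb_exists => /forallP/(_ k1).
  by rewrite E eqxx H2.
- by move/val_inj/perm_inj: H2 => E2; move: E; rewrite E2; lia.
Qed.

Lemma Wsum_swap n (b al : nat -> nat) (s : 'S_n) (k k1 : 'I_n) : k != k1 ->
  Wsum b al (tperm k k1 * s)%g + b k * al (s k) + b k1 * al (s k1)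
  = Wsum b al s + b k * al (s k1) + b k1 * al (s k).
Proof.
move=> kk1; rewrite /Wsum (bigD1 k) // (bigD1 k1) 1?eq_sym //=.
rewrite [in RHS](bigD1 k) // [in RHS](bigD1 k1) 1?eq_sym //=.
rewrite !permM tpermL tpermR.
set S1 := \sum_(i | _) _; set S2 := \sum_(i | _) _.
have -> : S1 = S2.
  apply: eq_bigr => i /andP[ik ik1]; rewrite permM tpermD // eq_sym //.
lia.
Qed.

Lemma Wsum_swap_lt n (b al : nat -> nat) (s : 'S_n) (k k1 : 'I_n) : k != k1 ->
  b k < b k1 -> al (s k1) < al (s k) -> Wsum b al s < Wsum b al (tperm k k1 * s)%g.
Proof.
move=> kk1 H1 H2; have := Wsum_swap b al s kk1; nia.
Qed.

Lemma rearrangement n (b al : nat -> nat) :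
  (forall i j, i < j < n -> b i < b j) -> (forall i j, i < j < n -> al i < al j) ->
  forall s : 'S_n, s != 1%g -> Wsum b al s < Wsum b al (1%g : 'S_n).
Proof.
move=> Hb Hal.
pose Phi (s : 'S_n) := Wsum id id s.
have Hbound : forall s, Phi s <= n * (n * n).
  move=> s; rewrite /Phi /Wsum.
  apply: leq_trans (_ : \sum_(i < n) n * n <= _); last by rewrite sum_nat_const card_ord.
  apply: leq_sum => i _; apply: leq_mul; apply: ltnW; exact: ltn_ord.
suff : forall m s, n * (n * n) - Phi s < m -> s != 1%g -> Wsum b al s < Wsum b al (1%g : 'S_n).
  by move=> H s; apply: (H (n * (n * n) - Phi s).+1).
elim=> [//|m IH] s Hm Hs.
have [k [k1 [E Hd]]] := descent Hs.
have E' : nat_of_ord k1 = (nat_of_ord k).+1 := E.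
have kk1 : k != k1 by apply/eqP => E2; move: E; rewrite E2; lia.
have kk1n : (k < k1 < n) by have := ltn_ord k1; lia.
have Hlt : Wsum b al s < Wsum b al (tperm k k1 * s)%g.
  have Hsk := ltn_ord (s k).
  by apply: Wsum_swap_lt => //; [apply: Hb | apply: Hal]; lia.
have HPhi : Phi s < Phi (tperm k k1 * s)%g.
  by apply: Wsum_swap_lt => //=; lia.
case: (eqVneq (tperm k k1 * s)%g 1%g) => [E1|Hne].
  by move: Hlt; rewrite E1.
apply: ltn_trans Hlt (IH _ _ Hne).
have := Hbound (tperm k k1 * s)%g; lia.
Qed.

Local Open Scope ring_scope.

Lemma one_sub_qn_tofrac (R : realType) (k : nat) :
  1 - qq R ^+ k = FracField.tofrac (1 - 'X^k : {poly (complex R)}).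
Proof. by rewrite rmorphB rmorph1 rmorphXn. Qed.

Lemma one_sub_qn_neq0 (R : realType) (k : nat) : (0 < k)%N -> 1 - qq R ^+ k != 0.
Proof.
move=> k0; rewrite one_sub_qn_tofrac tofrac_eq0 subr_eq0.
apply/negP => /eqP H.
have := congr1 (fun p : {poly (complex R)} => size p) H.
rewrite size_poly1 size_polyXn; lia.
Qed.

Definition hq (R : realType) (n : nat) : Cq R := (qpoch (qq R) (qq R) n)^-1.
Definition Hq (R : realType) (n s : nat) : Cq R :=
  if (2 * s <= n)%N then hq R (n - 2 * s) else 0.
Definition gq (R : realType) (z : Cq R) (n : nat) : Cq R :=
  qpoch z (qq R ^+ 2) n / (qpoch z (qq R) n * qpoch (qq R) (qq R) n).
Fixpoint cc (R : realType) (s : nat) (z : Cq R) : Cq R :=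
  match s with
  | 0 => 1
  | s'.+1 => z * qq R ^+ (2 * s' + 1) / ((1 - qq R ^+ (2 * s' + 2)) * (1 - z * qq R))
             * cc s' (z * qq R ^+ 2)
  end.

Lemma qpochS (F : fieldType) (a b : F) n : qpoch a b n.+1 = qpoch a b n * (1 - a * b ^+ n).
Proof. by rewrite /qpoch big_ord_recr. Qed.

Lemma qpochSl (F : fieldType) (a b : F) n : qpoch a b n.+1 = (1 - a) * qpoch (a * b) b n.
Proof.
rewrite /qpoch big_ord_recl expr0 mulr1; congr (_ * _).
by apply: eq_bigr => i _; rewrite lift0 exprS mulrA.
Qed.

Lemma qpoch_neq0 (R : realType) e n : (0 < e)%N -> qpoch (qq R ^+ e) (qq R) n != 0.
Proof.
move=> e0; apply/prodf_neq0 => i _; rewrite -exprD; apply: one_sub_qn_neq0; lia.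
Qed.

Lemma qpochqq_neq0 (R : realType) n : qpoch (qq R) (qq R) n != 0.
Proof. by have := @qpoch_neq0 R 1 n; rewrite expr1; apply. Qed.

Lemma gq_rec_alg (F : fieldType) (z q Q A B D P : F) :
  1 - z != 0 -> 1 - z * q != 0 -> D != 0 -> P != 0 -> 1 - q * Q != 0 ->
  1 - q * (q * Q) != 0 -> 1 - z * q * Q != 0 ->
  (1 - z * q) * B = D * (1 - z * q * Q) ->
  (1 - q * (q * Q)) * ((1 - z) * A * (1 - z * (q ^+ 2 * Q ^+ 2)) /
     ((1 - z) * (1 - z * q) * B * (P * (1 - q * Q) * (1 - q * (q * Q)))))
  = (1 - z) * A / ((1 - z) * D * (P * (1 - q * Q)))
    + z * (q * Q) / (1 - z * q) * (A / (B * P)).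
Proof.
move=> n1 n2 n3 n4 n5 n6 n7 hB.
have -> : B = D * (1 - z * q * Q) / (1 - z * q) by rewrite -hB mulrC mulKf.
by field; rewrite ?n1 ?n2 ?n3 ?n4 ?n5 ?n6 ?n7.
Qed.

Section QP.
Variable F : fieldType.
Implicit Types z q : F.
Lemma L1 z q k : qpoch z (q ^+ 2) k.+2 =
  (1 - z) * qpoch (z * q ^+ 2) (q ^+ 2) k * (1 - z * (q ^+ 2 * (q ^+ k) ^+ 2)).
Proof. by rewrite qpochS qpochSl (exprS (q ^+ 2) k) -!exprM mulnC. Qed.
Lemma L2 z q k : qpoch z q k.+2 = (1 - z) * (1 - z * q) * qpoch (z * q ^+ 2) q k.
Proof. by rewrite qpochSl qpochSl mulrA -(mulrA z) -expr2. Qed.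
Lemma L3 z q k : qpoch z (q ^+ 2) k.+1 = (1 - z) * qpoch (z * q ^+ 2) (q ^+ 2) k.
Proof. exact: qpochSl. Qed.
Lemma L4 z q k : qpoch z q k.+1 = (1 - z) * qpoch (z * q) q k.
Proof. exact: qpochSl. Qed.
Lemma L5 q k : qpoch q q k.+2 = qpoch q q k * (1 - q * q ^+ k) * (1 - q * (q * q ^+ k)).
Proof. by rewrite !qpochS (exprS q k). Qed.
Lemma L6 q k : qpoch q q k.+1 = qpoch q q k * (1 - q * q ^+ k).
Proof. exact: qpochS. Qed.
Lemma L7 z q k : (1 - z * q) * qpoch (z * q ^+ 2) q k = qpoch (z * q) q k * (1 - z * q * q ^+ k).
Proof. by rewrite -qpochS qpochSl -(mulrA z) -expr2. Qed.
End QP.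

Lemma gq_rec (R : realType) e k : (0 < e)%N ->
  (1 - qq R ^+ k.+2) * gq (qq R ^+ e) k.+2 = gq (qq R ^+ e) k.+1
   + qq R ^+ e * qq R ^+ k.+1 / (1 - qq R ^+ e * qq R) * gq (qq R ^+ e * qq R ^+ 2) k.
Proof.
move=> e0.
have nz1 : 1 - qq R ^+ e != 0 by apply: one_sub_qn_neq0.
have nz2 : 1 - qq R ^+ e * qq R != 0 by rewrite -exprSr; apply: one_sub_qn_neq0.
have nz3 : 1 - qq R ^+ e * qq R * qq R ^+ k != 0 by rewrite -exprSr -exprD; apply: one_sub_qn_neq0; lia.
have nzD : qpoch (qq R ^+ e * qq R) (qq R) k != 0 by rewrite -exprSr; apply: qpoch_neq0.
have nzP : qpoch (qq R) (qq R) k != 0 by apply: qpochqq_neq0.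
have nz4 : 1 - qq R * qq R ^+ k != 0 by rewrite -exprS; apply: one_sub_qn_neq0.
have nz5 : 1 - qq R * (qq R * qq R ^+ k) != 0 by rewrite -!exprS; apply: one_sub_qn_neq0.
rewrite /gq L5 L6 L1 L2 L3 L4 (exprS _ k.+1) (exprS _ k).
by apply: gq_rec_alg => //; apply: L7.
Qed.

Lemma hq0 (R : realType) : hq R 0 = 1.
Proof. by rewrite /hq /qpoch big_ord0 invr1. Qed.

Lemma hqS (R : realType) m : (1 - qq R ^+ m.+1) * hq R m.+1 = hq R m.
Proof.
rewrite /hq qpochS -exprS invfM mulrC -mulrA mulVf ?mulr1 //.
exact: one_sub_qn_neq0.
Qed.

Lemma Hq_rec (R : realType) n s : (0 < n)%N ->
  (1 - qq R ^+ n) * Hq R n s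
  = Hq R n.-1 s + qq R ^+ (n - 2 * s) * (1 - qq R ^+ (2 * s)) * Hq R n s.
Proof.
move=> n0; rewrite /Hq.
case: (ltngtP (2 * s) n) => H.
- have -> : (2 * s <= n.-1)%N by lia.
  have E : (n - 2 * s = (n.-1 - 2 * s).+1)%N by lia.
  rewrite E -(hqS R (n.-1 - 2 * s)).
  have -> : qq R ^+ n = qq R ^+ (n.-1 - 2 * s).+1 * qq R ^+ (2 * s).
    by rewrite -exprD; congr (_ ^+ _); lia.
  set X := qq R ^+ _.+1; set Y := qq R ^+ (2 * s); set h := hq R _.
  ring.
- have -> : (2 * s <= n.-1)%N = false by apply/negbTE; rewrite -ltnNge; lia.
  by rewrite !mulr0 addr0.
- have -> : (2 * s <= n.-1)%N = false by apply/negbTE; rewrite -ltnNge; lia.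
  by rewrite -H subnn hq0 expr0 mul1r !mulr1 add0r.
Qed.

Lemma Hq_shift (R : realType) n s : Hq R n.+2 s.+1 = Hq R n s.
Proof.
rewrite /Hq.
have -> : (2 * s.+1 <= n.+2)%N = (2 * s <= n)%N by apply/idP/idP; lia.
by have -> : (n.+2 - 2 * s.+1 = n - 2 * s)%N by lia.
Qed.

Lemma alg2 (F : fieldType) (z x y w u c h : F) : 1 - w != 0 -> u != 0 ->
  z * x / ((1 - w) * u) * c * (y * (1 - w) * h) = z * (x * y) / u * (c * h).
Proof. by move=> n1 n2; field; rewrite n1 n2. Qed.

Lemma gq0 (R : realType) (z : Cq R) : gq z 0 = 1.
Proof. by rewrite /gq /qpoch !big_ord0 mulr1 divr1. Qed.

Lemma gq1 (R : realType) e : (0 < e)%N -> gq (qq R ^+ e) 1 = hq R 1.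
Proof.
move=> e0; rewrite /gq /hq /qpoch !big_ord1 !expr0 !mulr1.
rewrite invfM mulrA mulfV ?mul1r //; exact: one_sub_qn_neq0.
Qed.

Lemma sum_Hq_small (R : realType) (z : Cq R) n S : (n < 2 * S.+1)%N -> (n <= 1)%N ->
  \sum_(s < S.+1) cc s z * Hq R n s = hq R n.
Proof.
move=> _ n1; rewrite big_ord_recl /= mul1r /Hq muln0 subn0 /=.
rewrite big1 ?addr0 // => i _.
have -> : (2 * (bump 0 i) <= n)%N = false by apply/negbTE; rewrite -ltnNge /bump /=; lia.
by rewrite mulr0.
Qed.

Lemma gq_expand (R : realType) n : forall e S, (0 < e)%N -> (n < 2 * S)%N ->
  gq (qq R ^+ e) n = \sum_(s < S) cc s (qq R ^+ e) * Hq R n s.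
Proof.
suff : (forall e S, (0 < e)%N -> (n < 2 * S)%N ->
  gq (qq R ^+ e) n = \sum_(s < S) cc s (qq R ^+ e) * Hq R n s) /\
  (forall e S, (0 < e)%N -> (n.+1 < 2 * S)%N ->
  gq (qq R ^+ e) n.+1 = \sum_(s < S) cc s (qq R ^+ e) * Hq R n.+1 s) by case.
elim: n => [|k [IH0 IH1]].
  split => e [|S] e0 HS //.
    by rewrite gq0 sum_Hq_small // hq0.
  by rewrite gq1 // sum_Hq_small.
split => // e [|[|S]] e0 HS //.
have nz : 1 - qq R ^+ k.+2 != 0 by apply: one_sub_qn_neq0.
have E2 : qq R ^+ e * qq R ^+ 2 = qq R ^+ (e + 2)%N by rewrite exprD.
apply: (mulfI nz); rewrite gq_rec // (IH1 e S.+2); try lia.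
rewrite E2 (IH0 (e + 2)%N S.+1); try lia.
rewrite [RHS]mulr_sumr.
have -> : \sum_(i < S.+2) (1 - qq R ^+ k.+2) * (cc i (qq R ^+ e) * Hq R k.+2 i)
  = \sum_(i < S.+2) cc i (qq R ^+ e) * Hq R k.+1 i
    + \sum_(i < S.+2) cc i (qq R ^+ e) * (qq R ^+ (k.+2 - 2 * i) * (1 - qq R ^+ (2 * i)) * Hq R k.+2 i).
  rewrite -big_split /=; apply: eq_bigr => i _.
  by rewrite mulrCA Hq_rec // mulrDr.
congr (_ + _).
rewrite [RHS]big_ord_recl [X in _ = X + _](_ : _ = 0) ?add0r; last by rewrite /= muln0 expr0 subrr mulr0 mul0r mulr0.
rewrite mulr_sumr.
apply: eq_bigr => i _; rewrite lift0 Hq_shift.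
case: (leqP (2 * i) k) => Hi.
  have -> : (k.+2 - 2 * i.+1 = k - 2 * i)%N by lia.
  have -> : (2 * i.+1 = 2 * i + 2)%N by lia.
  rewrite [RHS]/= alg2 ?E2.
  - rewrite -(exprD _ (2 * i + 1)%N).
    have -> : (2 * i + 1 + (k - 2 * i) = k.+1)%N by lia.
    by [].
  - apply: one_sub_qn_neq0; lia.
  - rewrite -exprSr; apply: one_sub_qn_neq0; lia.
by rewrite /Hq leqNgt Hi /= !mulr0.
Qed.

Definition Pe (R : realType) (al bb : nat) : {poly (complex R)} :=
  if (bb <= al)%N then \prod_(j < bb) (1 - 'X^(al - bb + j.+1)) else 0.
Definition Dg (al bb : nat) : nat := (\sum_(j < bb) (al - bb + j.+1))%N.

Lemma size_1subXn (R : realType) e : (0 < e)%N -> size (1 - 'X^e : {poly (complex R)}) = e.+1.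
Proof. by move=> e0; rewrite -opprB size_opp size_Xn_sub_1. Qed.

Lemma size_Pe (R : realType) al bb : (bb <= al)%N -> size (Pe R al bb) = (Dg al bb).+1.
Proof.
move=> H; rewrite /Pe H size_prod; last first.
  by move=> j _; rewrite -size_poly_eq0 size_1subXn //; lia.
rewrite (eq_bigr (fun j : 'I_bb => (al - bb + j.+1).+1)); last first.
  by move=> j _; rewrite size_1subXn //; lia.
rewrite card_ord /Dg.
have -> : \sum_(j < bb) (al - bb + j.+1).+1 = (\sum_(j < bb) (al - bb + j.+1) + bb)%N.
  rewrite (eq_bigr (fun j : 'I_bb => (al - bb + j.+1) + 1)%N); last by move=> j _; lia.
  by rewrite big_split /= sum_nat_const card_ord muln1.
lia.
Qed.

Lemma Pe_neq0 (R : realType) al bb : (bb <= al)%N -> Pe R al bb != 0.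
Proof. by move=> H; rewrite -size_poly_eq0 size_Pe. Qed.

Lemma Dg_eq al bb : (bb <= al)%N -> (Dg al bb + \sum_(j < bb) j = bb * al)%N.
Proof.
elim: bb => [|bb IH] H; first by rewrite /Dg !big_ord0.
rewrite /Dg big_ord_recl [X in (_ + X)%N]big_ord_recr /=.
have -> : \sum_(i < bb) (al - bb.+1 + (bump 0 i).+1)%N = Dg al bb.
  by apply: eq_bigr => i _; rewrite /bump /=; lia.
have E2 : (\sum_(i < bb) (widen_ord (leqnSn bb) i : nat) = \sum_(j < bb) (j : nat))%N by apply: eq_bigr.
rewrite E2 mulSn; have := IH ltac:(lia); lia.
Qed.

Lemma qpoch_add (F : fieldType) (a b : F) m n :
  qpoch a b (m + n) = qpoch a b m * \prod_(j < n) (1 - a * b ^+ (m + j)).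
Proof.
elim: n => [|n IH]; first by rewrite addn0 big_ord0 mulr1.
by rewrite addnS qpochS IH big_ord_recr /= mulrA.
Qed.

Definition Ne (R : realType) (al bb : nat) : Cq R :=
  if (bb <= al)%N then hq R (al - bb) else 0.
Definition Nmat (R : realType) n (al b : nat -> nat) : 'M[Cq R]_n :=
  \matrix_(k < n, p < n) Ne R (al p) (b k).
Definition Pmat (R : realType) n (al b : nat -> nat) : 'M[{poly (complex R)}]_n :=
  \matrix_(k < n, p < n) Pe R (al p) (b k).

Lemma Pe_tofrac (R : realType) al bb :
  FracField.tofrac (Pe R al bb) = Ne R al bb * qpoch (qq R) (qq R) al.
Proof.
rewrite /Pe /Ne; case: leqP => H; last by rewrite rmorph0 mul0r.
have -> : qpoch (qq R) (qq R) al = qpoch (qq R) (qq R) ((al - bb) + bb)%N by rewrite subnK.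
rewrite qpoch_add /hq mulKf ?qpochqq_neq0 // rmorph_prod.
apply: eq_bigr => j _; rewrite rmorphB rmorph1 rmorphXn -exprS addnS.
by [].
Qed.

Lemma map_Pmat (R : realType) n al b :
  map_mx (@FracField.tofrac _) (Pmat R n al b)
  = Nmat R n al b *m diag_mx (\row_(p < n) qpoch (qq R) (qq R) (al p)).
Proof.
by apply/matrixP => k p; rewrite mul_mx_diag !mxE Pe_tofrac.
Qed.

Lemma det_Pmat_neq0 (R : realType) n (al b : nat -> nat) :
  (forall i j, (i < j < n)%N -> (b i < b j)%N) ->
  (forall i j, (i < j < n)%N -> (al i < al j)%N) ->
  (forall k, (k < n)%N -> (b k <= al k)%N) -> \det (Pmat R n al b) != 0.
Proof.
move=> Hb Hal Hd.
pose T := fun s : 'S_n => (-1) ^+ s * \prod_i Pmat R n al b i (s i).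
have -> : \det (Pmat R n al b) = T 1%g + \sum_(s | s != 1%g) T s.
  by rewrite /determinant (bigD1 1%g).
have sizeT : forall s : 'S_n, [forall i : 'I_n, b i <= al (s i)]%N ->
    size (T s) = (\sum_(i < n) Dg (al (s i)) (b i)).+1%N.
  move=> s /forallP H; rewrite size_Msign size_prod; last first.
    by move=> i _; rewrite mxE; apply: Pe_neq0; exact: H.
  rewrite (eq_bigr (fun i => (Dg (al (s i)) (b i)) + 1)%N); last first.
    by move=> i _; rewrite mxE size_Pe ?addn1 //; exact: H.
  by rewrite big_split /= sum_nat_const card_ord muln1; lia.
have T1 : size (T 1%g) = (\sum_(i < n) Dg (al i) (b i)).+1%N.
  rewrite sizeT; last by apply/forallP => i; rewrite perm1; apply: Hd.
  by congr _.+1; apply: eq_bigr => i _; rewrite perm1.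
have Tlt : forall s : 'S_n, s != 1%g -> (size (T s) < size (T 1%g))%N.
  move=> s Hs; case: (boolP [forall i : 'I_n, b i <= al (s i)]%N) => H.
    rewrite sizeT // T1 ltnS.
    have W := rearrangement Hb Hal Hs.
    have E1 : (\sum_(i < n) Dg (al (s i)) (b i) + \sum_(i < n) \sum_(j < b i) j = Wsum b al s)%N.
      rewrite /Wsum -big_split /=; apply: eq_bigr => i _; apply: Dg_eq.
      by move/forallP: H; apply.
    have E2 : (\sum_(i < n) Dg (al i) (b i) + \sum_(i < n) \sum_(j < b i) j = Wsum b al (1%g : 'S_n))%N.
      rewrite /Wsum -big_split /=; apply: eq_bigr => i _; rewrite perm1; apply: Dg_eq; exact: Hd.
    lia.
  move: H; rewrite negb_forall => /existsP[i Hi].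
  rewrite /T (bigD1 i) //= mxE /Pe (negbTE Hi) mul0r mulr0 size_poly0 T1 //.
have Hsum : (size (\sum_(s | s != 1%g) T s)%R < size (T 1%g))%N.
  apply: (big_ind (fun p : {poly (complex R)} => size p < size (T 1%g))%N).
  - by rewrite size_poly0 T1.
  - move=> x y Hx Hy; apply: leq_ltn_trans (size_polyD x y) _.
    by rewrite gtn_max Hx Hy.
  - exact: Tlt.
by rewrite -size_poly_eq0 size_polyDl // T1.
Qed.

Lemma det_Nmat_neq0 (R : realType) n (al b : nat -> nat) :
  (forall i j, (i < j < n)%N -> (b i < b j)%N) ->
  (forall i j, (i < j < n)%N -> (al i < al j)%N) ->
  (forall k, (k < n)%N -> (b k <= al k)%N) -> \det (Nmat R n al b) != 0.
Proof.
move=> Hb Hal Hd; apply/negP => /eqP H0.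
have := det_Pmat_neq0 R Hb Hal Hd.
by rewrite -tofrac_eq0 -det_map_mx map_Pmat det_mulmx H0 mul0r eqxx.
Qed.

Lemma lower_exists (R : realType) n : forall (al b : nat -> nat),
  (forall i j, (i < j < n)%N -> (b i < b j)%N) ->
  (forall i j, (i < j < n)%N -> (al i < al j)%N) ->
  (forall k, (k < n)%N -> (b k <= al k)%N) ->
  exists f : 'M[Cq R]_n,
    [/\ (forall i j : 'I_n, (i < j)%N -> f i j = 0),
        (forall i : 'I_n, f i i = 1) &
        (forall i j : 'I_n, (j < i)%N -> (Nmat R n al b *m f) i j = 0)].
Proof.
elim: n => [|n IH] al b Hb Hal Hd.
  by exists 0; split => -[].
pose al' := fun k => al k.+1; pose b' := fun k => b k.+1.
have Hb' : forall i j, (i < j < n)%N -> (b' i < b' j)%N.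
  by move=> i j H; apply: Hb; lia.
have Hal' : forall i j, (i < j < n)%N -> (al' i < al' j)%N.
  by move=> i j H; apply: Hal; lia.
have Hd' : forall k, (k < n)%N -> (b' k <= al' k)%N.
  by move=> k H; apply: Hd; lia.
have [f' [Hf1 Hf2 Hf3]] := IH al' b' Hb' Hal' Hd'.
set D := Nmat R n al' b'.
have uD : D \in unitmx by rewrite unitmxE unitfE det_Nmat_neq0.
pose c : 'cV[Cq R]_n := \col_(k < n) Ne R (al 0) (b k.+1).
pose y := - (invmx D *m c).
have Dy : D *m y = - c by rewrite mulmxN mulKVmx.
pose f : 'M[Cq R]_n.+1 := \matrix_(i, j)
  match unlift ord0 j, unlift ord0 i with
  | None, None => 1
  | None, Some i' => y i' 0
  | Some j', None => 0
  | Some j', Some i' => f' i' j'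
  end.
have fLL : forall i' j', f (lift ord0 i') (lift ord0 j') = f' i' j'.
  by move=> i' j'; rewrite /f mxE !liftK.
have fL0 : forall i', f (lift ord0 i') ord0 = y i' 0.
  by move=> i'; rewrite /f mxE liftK unlift_none.
have f0L : forall j', f ord0 (lift ord0 j') = 0.
  by move=> j'; rewrite /f mxE liftK unlift_none.
have f00 : f ord0 ord0 = 1 by rewrite /f mxE unlift_none.
exists f; split.
- move=> i j.
  case: (unliftP ord0 j) => [j'|] ->; last by rewrite ltn0.
  case: (unliftP ord0 i) => [i'|] ->; last by rewrite f0L.
  by rewrite fLL !lift0 ltnS => /Hf1.
- move=> i.
  by case: (unliftP ord0 i) => [i'|] ->; [rewrite fLL; apply: Hf2 | exact: f00].
- move=> i j; case: (unliftP ord0 i) => [i'|] ->; last by [].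
  rewrite mxE big_ord_recl.
  have ND : forall k', Nmat R n.+1 al b (lift ord0 i') (lift ord0 k') = D i' k'.
    by move=> k'; rewrite !mxE !lift0.
  case: (unliftP ord0 j) => [j'|] -> Hji.
  + rewrite f0L mulr0 add0r.
    transitivity ((D *m f') i' j'); last by apply: Hf3; move: Hji; rewrite !lift0.
    rewrite mxE; apply: eq_bigr => k _.
    by rewrite ND fLL.
  + rewrite f00 mulr1.
    have E0 : (D *m y) i' 0 = - c i' 0 by rewrite Dy mxE.
    rewrite mxE in E0.
    have Nc : Nmat R n.+1 al b (lift ord0 i') ord0 = c i' 0 by rewrite !mxE lift0.
    rewrite Nc (eq_bigr (fun k => D i' k * y k 0)); last by move=> k _; rewrite ND fL0.
    by rewrite E0 addrN.
Qed.

Lemma sum_shift (F : fieldType) m i (G : nat -> F) : (i <= m)%N ->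
  \sum_(k < m) (if (i <= k)%N then G (k - i)%N else 0) = \sum_(s < m - i) G s.
Proof.
move=> im; rewrite -(big_mkord xpredT (fun k => if (i <= k)%N then G (k - i)%N else 0)) (big_cat_nat (leq0n i) im) /=.
rewrite big_nat_cond big1 ?add0r; last by move=> k /andP[/andP[_ Hk] _]; rewrite leqNgt Hk.
rewrite -{1}(add0n i) big_addn -(big_mkord xpredT G).
by apply: eq_big_nat => s Hs; rewrite leq_addl addnK.
Qed.

Definition Tmat (R : realType) (m x : nat) : 'M[Cq R]_m :=
  \matrix_(i < m, k < m) if (i <= k)%N then cc (k - i)%N (qq R ^+ (2 * x + 2 * i.+1)) else 0.

Lemma mprime_fact (R : realType) (a : seq nat) x :
  (forall k, (k < size a)%N -> (nth 0 a k <= 2 * size a)%N) ->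
  mprime R a x = Tmat R (size a) x *m Nmat R (size a) (fun p => nth 0 a p) (fun k => 2 * k + 1)%N.
Proof.
move=> Hle; apply/matrixP => i j.
rewrite [LHS]mxE [RHS]mxE /=.
rewrite (eq_bigr (fun k : 'I_(size a) => if (i <= k)%N then
   (fun s => cc s (qq R ^+ (2 * x + 2 * i.+1)) * Ne R (nth 0 a j) (2 * (i + s) + 1)) (k - i)%N else 0)); last first.
  move=> k _; rewrite !mxE; case: ifP => H /=; last by rewrite mul0r.
  by rewrite subnKC.
rewrite (sum_shift (fun s => cc s (qq R ^+ (2 * x + 2 * i.+1)) * Ne R (nth 0 a j) (2 * (i + s) + 1))); last exact: ltnW.
have Hj := Hle j (ltn_ord j).
rewrite (_ : (a`_j)%R = nth 0%N a j) //.
case: ifP => Hij.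
  change (gq (qq R ^+ (2 * x + 2 * i.+1)) (nth 0%N a j - (2 * i + 1))%N = \sum_(s < size a - i) cc s (qq R ^+ (2 * x + 2 * i.+1)) * Ne R (nth 0%N a j) (2 * (i + s) + 1)%N).
  have Hi := ltn_ord i.
  have Hij' : (2 * i + 1 <= nth 0 a j)%N := Hij.
  rewrite (@gq_expand R _ (2 * x + 2 * i.+1) (size a - i)%N); [|lia|lia].
  apply: eq_bigr => s _; congr (_ * _).
  rewrite /Ne /Hq.
  have -> : (2 * (i + s) + 1 <= nth 0 a j)%N = (2 * s <= nth 0 a j - (2 * i + 1))%N.
    by apply/idP/idP; lia.
  by case: ifP => // _; congr (hq R _); lia.
rewrite big1 // => s _; rewrite /Ne.
have -> : (2 * (i + s) + 1 <= nth 0 a j)%N = false by apply/negbTE; lia.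
by rewrite mulr0.
Qed.

Theorem mainTheorem2 (R : realType) (a : seq nat) :
  irreducible_seq a ->
  exists f : 'M[Cq R]_(size a),
    (forall i j : 'I_(size a), (i < j)%N -> f i j = 0) /\
    (forall i : 'I_(size a), f i i = 1) /\
    exists d : 'I_(size a) -> Cq R,
      forall x : nat,
        (forall i j : 'I_(size a), (j < i)%N -> (@mprime R a x *m f) i j = 0) /\
        (forall i : 'I_(size a), (@mprime R a x *m f) i i = d i).
Proof.
move=> [[Hsort Hadm] _].
set m := size a.
have Hb : forall i j, (i < j < m)%N -> (2 * i + 1 < 2 * j + 1)%N by move=> i j; lia.
have Hal : forall i j, (i < j < m)%N -> (nth 0 a i < nth 0 a j)%N.
  move=> i j /andP[ij jm].
  by apply: (sorted_ltn_nth ltn_trans 0 Hsort) => //; rewrite inE /=; lia.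
have Hd : forall k, (k < m)%N -> (2 * k + 1 <= nth 0 a k)%N.
  by move=> k /Hadm /andP[].
have Hle : forall k, (k < m)%N -> (nth 0 a k <= 2 * m)%N.
  by move=> k /Hadm /andP[].
have [f [Hf1 Hf2 Hf3]] := @lower_exists R m (fun p => nth 0 a p) (fun k => 2 * k + 1)%N Hb Hal Hd.
set N := Nmat R m (fun p => nth 0 a p) (fun k => 2 * k + 1)%N in Hf3.
exists f; split => //; split => //.
exists (fun i => (N *m f) i i) => x.
rewrite mprime_fact // -mulmxA.
have TU : forall i k : 'I_m, (Tmat R m x i k != 0) -> (i <= k)%N.
  by move=> i k; rewrite mxE; case: ifP => // _; rewrite eqxx.
split.
- move=> i j ji; rewrite mxE big1 // => k _.
  case: (boolP (Tmat R m x i k == 0)) => [/eqP -> | /TU ik]; first by rewrite mul0r.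
  by rewrite Hf3 ?mulr0 //; apply: leq_trans ji ik.
- move=> i; rewrite mxE (bigD1 i) //= big1 ?addr0.
    by rewrite mxE leqnn subnn /= mul1r.
  move=> k ki.
  case: (boolP (Tmat R m x i k == 0)) => [/eqP -> | /TU ik]; first by rewrite mul0r.
  rewrite Hf3 ?mulr0 //; rewrite ltn_neqAle ik andbT.
  by apply: contra ki => /eqP E; apply/eqP/val_inj.
Qed.
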